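(* Let $P\subset\mathbb{R}^2$ be any set with $0\in P$ such that the contingent cone $T_P(0)$ contains neither $(1,\tfrac12)$ nor $(1,-\tfrac12)$. For $p\in P$, $x\in\mathbb{R}^2$, $y\in\mathbb{R}^2$ let $G(p,x,y):=(x_1-p_1-\tfrac12y_1-\tfrac12y_2,\ -x_2-p_2+y_1-y_2)$, $\varphi_1(x):=-\tfrac12x_1+x_2$, $\varphi_2(x):=-\tfrac12x_1-x_2$, and consider the KKT system (for minimizing $\tfrac12x_1^2-\tfrac12x_2^2-\langle p,x\rangle$ subject to $\varphi_1(x)\le0,\varphi_2(x)\le0$) $$g(p,x,y):=(G(p,x,y),(\varphi(x),y))\in C:=\{0_{\mathbb{R}^2}\}\times\operatorname{gph}N_{\mathbb{R}^2_-},$$ with solution map $\Gamma(p):=\{(x,y): g(p,x,y)\in C\}$. Then this system enjoys Robinson stability at $(\bar p,\bar x,\bar y)=(0,0,0)$, and $\Gamma:P\rightrightarrows\mathbb{R}^2\times\mathbb{R}^2$ is Lipschitz-like around $(0,(0,0))$.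
   Context: $\operatorname{gph}N_{\mathbb{R}^2_-}=\{(a,y)\in\mathbb{R}^2\times\mathbb{R}^2: a\le0,\ y\ge0,\ a_iy_i=0,\ i=1,2\}$. Contingent cone $T_P(0)=\{w:\exists t_k\downarrow0,w_k\to w,\ t_kw_k\in P\}$. Robinson stability at $(0,\xi_0)$: there exist $\kappa\ge0$ and neighborhoods $V$ of $0$ in $P$, $U$ of $\xi_0$ with $\operatorname{dist}(\xi;\Gamma(p))\le\kappa\operatorname{dist}(g(p,\xi);C)$ for $(p,\xi)\in V\times U$. Lipschitz-like: there exist $\ell\ge0$ and neighborhoods $V$ of $0$ in $P$, $U$ of $(0,0)$ with $\Gamma(p)\cap U\subset\Gamma(p')+\ell\|p-p'\|\mathbb{B}$ for all $p,p'\in V$. *)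

(* Defs.v *)
From Stdlib Require Import Reals Lra.
Open Scope R_scope.

Definition R2 : Type := (R * R)%type.

Definition norm2 (a : R2) : R := sqrt (fst a ^ 2 + snd a ^ 2).
Definition sub2 (a b : R2) : R2 := (fst a - fst b, snd a - snd b).
Definition scal2 (t : R) (a : R2) : R2 := (t * fst a, t * snd a).

Definition contingent_cone0 (P : R2 -> Prop) (w : R2) : Prop :=
  exists (t : nat -> R) (wk : nat -> R2),
    (forall k, 0 < t k) /\ Un_cv t 0 /\
    Un_cv (fun k => fst (wk k)) (fst w) /\ Un_cv (fun k => snd (wk k)) (snd w) /\
    (forall k, P (scal2 (t k) (wk k))).

Definition G (p x y : R2) : R2 :=
  (fst x - fst p - /2 * fst y - /2 * snd y,
   - snd x - snd p + fst y - snd y).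
Definition phi (x : R2) : R2 := (- /2 * fst x + snd x, - /2 * fst x - snd x).

Definition gphN (a y : R2) : Prop :=
  fst a <= 0 /\ snd a <= 0 /\ 0 <= fst y /\ 0 <= snd y /\
  fst a * fst y = 0 /\ snd a * snd y = 0.

Definition inC (u a b : R2) : Prop := u = (0, 0) /\ gphN a b.

Definition Gamma (p : R2) (xi : R2 * R2) : Prop :=
  inC (G p (fst xi) (snd xi)) (phi (fst xi)) (snd xi).

Definition dist4 (xi z : R2 * R2) : R :=
  sqrt (norm2 (sub2 (fst xi) (fst z)) ^ 2 + norm2 (sub2 (snd xi) (snd z)) ^ 2).

Definition dist_g (p : R2) (xi : R2 * R2) (u a b : R2) : R :=
  sqrt (norm2 (sub2 (G p (fst xi) (snd xi)) u) ^ 2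
        + norm2 (sub2 (phi (fst xi)) a) ^ 2 + norm2 (sub2 (snd xi) b) ^ 2).

(* Robinson stability at (0, xi0):
   dist(xi; Gamma(p)) <= kappa * dist(g(p,xi); C) for p in P near 0, xi near xi0.
   Written out: since dist(g;C) = inf_{c in C} |g - c| and dist(xi;Gamma p) is an
   infimum (= +oo if Gamma p is empty), the inequality is equivalent to:
   for every c in C and every eps > 0 there is z in Gamma p with
   |xi - z| <= kappa |g - c| + eps. *)
Definition robinson_stable (P : R2 -> Prop) (xi0 : R2 * R2) : Prop :=
  exists kappa dV dU : R, 0 <= kappa /\ 0 < dV /\ 0 < dU /\
    forall (p : R2) (xi : R2 * R2),
      P p -> norm2 p < dV -> dist4 xi xi0 < dU ->
      forall u a b : R2, inC u a b ->
      forall eps : R, 0 < eps ->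
      exists z : R2 * R2, Gamma p z /\ dist4 xi z <= kappa * dist_g p xi u a b + eps.

Definition lipschitz_like (P : R2 -> Prop) (xi0 : R2 * R2) : Prop :=
  exists l dV dU : R, 0 <= l /\ 0 < dV /\ 0 < dU /\
    forall (p p' : R2) (z : R2 * R2),
      P p -> norm2 p < dV -> P p' -> norm2 p' < dV ->
      Gamma p z -> dist4 z xi0 < dU ->
      exists z' : R2 * R2, Gamma p' z' /\ dist4 z z' <= l * norm2 (sub2 p p').

(* Main.v *)
Require Import Defs.
From Stdlib Require Import Reals Lra Classical ClassicalEpsilon.
Open Scope R_scope.

Lemma Gamma_iff p1 p2 x1 x2 y1 y2 : Gamma (p1,p2) ((x1,x2),(y1,y2)) <->
  (x1 - p1 - /2*y1 - /2*y2 = 0 /\ - x2 - p2 + y1 - y2 = 0 /\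
   - /2*x1 + x2 <= 0 /\ - /2*x1 - x2 <= 0 /\ 0 <= y1 /\ 0 <= y2 /\
   (- /2*x1 + x2)*y1 = 0 /\ (- /2*x1 - x2)*y2 = 0).
Proof.
  unfold Gamma, inC, gphN, G, phi; simpl; split.
  - intros [H1 H2]. injection H1; intros. tauto.
  - intros (H1&H2&H3). split; [f_equal; assumption| tauto].
Qed.

Lemma solA p1 p2 : p1 + 2*p2 >= 0 -> p1 - 2*p2 >= 0 -> Gamma (p1,p2) ((p1,-p2),(0,0)).
Proof. intros; apply Gamma_iff; repeat split; try lra; ring. Qed.

Lemma solB p1 p2 : p1 + 2*p2 >= 0 -> 2*p1 + p2 >= 0 ->
  Gamma (p1,p2) (((4*p1+2*p2)/3, (2*p1+p2)/3),((2*p1+4*p2)/3, 0)).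
Proof. intros; apply Gamma_iff; repeat split; try lra; try ring;
  apply Rmult_eq_0_compat_r; lra. Qed.

Lemma solC p1 p2 : p1 - 2*p2 >= 0 -> 2*p1 - p2 >= 0 ->
  Gamma (p1,p2) (((4*p1-2*p2)/3, -(2*p1-p2)/3),(0, (2*p1-4*p2)/3)).
Proof. intros; apply Gamma_iff; repeat split; try lra; try ring;
  apply Rmult_eq_0_compat_r; lra. Qed.

Lemma solD p1 p2 : -2*p1 + p2 >= 0 -> -2*p1 - p2 >= 0 ->
  Gamma (p1,p2) ((0,0),((-2*p1+p2)/2, (-2*p1-p2)/2)).
Proof. intros; apply Gamma_iff; repeat split; try lra; try ring. Qed.

Lemma Gamma_cases p1 p2 x1 x2 y1 y2 : Gamma (p1,p2) ((x1,x2),(y1,y2)) ->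
  x1 - p1 - /2*y1 - /2*y2 = 0 /\ - x2 - p2 + y1 - y2 = 0 /\
   - /2*x1 + x2 <= 0 /\ - /2*x1 - x2 <= 0 /\ 0 <= y1 /\ 0 <= y2 /\
   (- /2*x1 + x2 = 0 \/ y1 = 0) /\ (- /2*x1 - x2 = 0 \/ y2 = 0).
Proof. intros H; apply Gamma_iff in H.
  destruct H as (H1&H2&H3&H4&H5&H6&H7&H8).
  apply Rmult_integral in H7; apply Rmult_integral in H8. tauto. Qed.

Definition box (z z' : R2 * R2) (K : R) : Prop :=
  Rabs (fst (fst z) - fst (fst z')) <= K /\ Rabs (snd (fst z) - snd (fst z')) <= K /\
  Rabs (fst (snd z) - fst (snd z')) <= K /\ Rabs (snd (snd z) - snd (snd z')) <= K.

Lemma norm2_sq v : norm2 v ^ 2 = fst v ^ 2 + snd v ^ 2.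
Proof. unfold norm2; apply pow2_sqrt; nra. Qed.

Lemma sqrt_le_of X Y : 0 <= Y -> X <= Y^2 -> sqrt X <= Y.
Proof. intros; rewrite <- (sqrt_pow2 Y) by lra; apply sqrt_le_1_alt; lra. Qed.

Lemma abs_le_sqrt a X : a^2 <= X -> Rabs a <= sqrt X.
Proof. intros; rewrite <- sqrt_Rsqr_abs; apply sqrt_le_1_alt; unfold Rsqr; lra. Qed.

Lemma box_dist4 z z' K : box z z' K -> dist4 z z' <= 4*K.
Proof.
  destruct z as [[a b][c d]], z' as [[a' b'][c' d']]; unfold box, dist4.
  rewrite !norm2_sq; unfold sub2; simpl. intros (H1&H2&H3&H4).
  assert (0 <= Rabs (a-a')) by apply Rabs_pos.
  apply sqrt_le_of; [lra|].
  assert (forall u v, Rabs u <= v -> u^2 <= v^2) as Q.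
  { intros u v Hu. assert (0 <= Rabs u) by apply Rabs_pos.
    rewrite <- (pow2_abs u). apply pow_incr; lra. }
  assert (0 <= K) by lra.
  apply Q in H1; apply Q in H2; apply Q in H3; apply Q in H4. nra.
Qed.

Lemma norm2_ge1 q : Rabs (fst q) <= norm2 q.
Proof. unfold norm2; apply abs_le_sqrt; nra. Qed.
Lemma norm2_ge2 q : Rabs (snd q) <= norm2 q.
Proof. unfold norm2; apply abs_le_sqrt; nra. Qed.

Lemma abs_bnd x J : Rabs x <= J -> -J <= x /\ x <= J.
Proof. unfold Rabs; destruct Rcase_abs; lra. Qed.

Ltac absH := repeat match goal with H : Rabs _ <= _ |- _ => apply abs_bnd in H; destruct H end.
Ltac absG := unfold box; simpl; repeat split; apply Rabs_le; split; lra.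

Lemma sol_bound p1 p2 x1 x2 y1 y2 J : Gamma (p1,p2) ((x1,x2),(y1,y2)) ->
  Rabs p1 <= J -> Rabs p2 <= J ->
  -2*J <= x1 <= 2*J /\ -2*J <= x2 <= 2*J /\ -2*J <= y1 <= 2*J /\ -2*J <= y2 <= 2*J.
Proof.
  intros H ? ?; apply Gamma_cases in H; absH.
  destruct H as (?&?&?&?&?&?&[?|?]&[?|?]); lra.
Qed.

Lemma exists_sol q1 q2 J : Rabs q1 <= J -> Rabs q2 <= J ->
  exists z, Gamma (q1,q2) z /\ -2*J <= fst (fst z) <= 2*J /\ -2*J <= snd (fst z) <= 2*J
   /\ -2*J <= fst (snd z) <= 2*J /\ -2*J <= snd (snd z) <= 2*J.
Proof.
  intros; absH.
  destruct (Rle_or_lt 0 (2*q1+q2)); destruct (Rle_or_lt 0 (2*q1-q2)).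
  - destruct (Rle_or_lt 0 (q1+2*q2)).
    + eexists; split; [apply solB; lra|simpl; lra].
    + eexists; split; [apply solC; lra|simpl; lra].
  - eexists; split; [apply solB; lra|simpl; lra].
  - eexists; split; [apply solC; lra|simpl; lra].
  - eexists; split; [apply solD; lra|simpl; lra].
Qed.

Lemma jump p1 p2 q1 q2 z J J' : Gamma (p1,p2) z ->
  Rabs p1 <= J -> Rabs p2 <= J -> Rabs q1 <= J' -> Rabs q2 <= J' ->
  exists z', Gamma (q1,q2) z' /\ box z z' (2*(J+J')).
Proof.
  intros Hz ? ? ? ?. destruct (exists_sol q1 q2 J') as [z' [Hz' B]]; auto.
  exists z'; split; auto. destruct z as [[x1 x2][y1 y2]].
  destruct (sol_bound _ _ _ _ _ _ J Hz) as (A1&A2&A3&A4); auto.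
  destruct z' as [[a b][c d]]; simpl in *. absG.
Qed.

Lemma box_mono z z' K1 K2 : box z z' K1 -> K1 <= K2 -> box z z' K2.
Proof. unfold box; intros; lra. Qed.

Lemma Sstep N p1 l B : 0 <= N -> p1 <= N * Rabs l -> Rabs l <= B -> p1 <= N*B.
Proof. intros. apply Rle_trans with (N * Rabs l); auto. apply Rmult_le_compat_l; auto. Qed.

Ltac finjump J J' :=
  match goal with |- exists z', Gamma (?q1,?q2) z' /\ box ?z z' ?K =>
    let Hj := fresh in
    assert (Hj : exists z', Gamma (q1,q2) z' /\ box z z' (2*(J+J')));
    [ eapply jump; [eassumption| apply Rabs_le; split; lra ..]
    | destruct Hj as [z' [? ?]]; exists z'; split; auto; eapply box_mono; eauto; lra ]
  end.

Lemma lip_core N W p1 p2 q1 q2 x1 x2 y1 y2 :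
  1 <= N -> Rabs (p1-q1) <= W -> Rabs (p2-q2) <= W ->
  (0 < p1 -> p1 <= N * Rabs (p1 + 2*p2) /\ p1 <= N * Rabs (p1 - 2*p2)) ->
  Gamma (p1,p2) ((x1,x2),(y1,y2)) ->
  exists z', Gamma (q1,q2) z' /\ box ((x1,x2),(y1,y2)) z' (20*(N*W)).
Proof.
  intros HN Hw1 Hw2 HS Hz.
  assert (0 <= W) by (pose proof (Rabs_pos (p1-q1)); lra).
  assert (W <= N*W) by nra.
  pose proof Hz as Hc. apply Gamma_cases in Hc.
  absH.
  destruct Hc as (E1&E2&F1&F2&Y1&Y2&[C1|C1]&[C2|C2]).
  -
    destruct (Rle_or_lt (2*q1+q2) 0); destruct (Rle_or_lt (2*q1-q2) 0).
    + eexists; split; [apply solD; lra| absG].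
    + destruct (Rle_or_lt 0 (q1-2*q2)).
      * eexists; split; [apply solC; lra| absG].
      * finjump (2*W) (3*W).
    + destruct (Rle_or_lt 0 (q1+2*q2)).
      * eexists; split; [apply solB; lra| absG].
      * finjump (2*W) (3*W).
    + destruct (Rle_or_lt 0 (q1+2*q2)).
      * eexists; split; [apply solB; lra| absG].
      * finjump (2*W) (3*W).
  -
    destruct (Rle_or_lt 0 (q1+2*q2)); [destruct (Rle_or_lt 0 (2*q1+q2))|].
    + eexists; split; [apply solB; lra| absG].
    + eexists; split; [apply solD; lra| absG].
    + destruct (Rle_or_lt p1 0) as [Hp|Hp].
      * finjump (3*(N*W)) (4*(N*W)).
      * destruct (HS Hp) as [S1 _].
        assert (p1 <= N*(3*W)) by (eapply Sstep; [lra|eauto|apply Rabs_le; split; lra]).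
        finjump (3*(N*W)) (4*(N*W)).
  -
    destruct (Rle_or_lt 0 (q1-2*q2)); [destruct (Rle_or_lt 0 (2*q1-q2))|].
    + eexists; split; [apply solC; lra| absG].
    + eexists; split; [apply solD; lra| absG].
    + destruct (Rle_or_lt p1 0) as [Hp|Hp].
      * finjump (3*(N*W)) (4*(N*W)).
      * destruct (HS Hp) as [_ S1].
        assert (p1 <= N*(3*W)) by (eapply Sstep; [lra|eauto|apply Rabs_le; split; lra]).
        finjump (3*(N*W)) (4*(N*W)).
  -
    destruct (Rle_or_lt 0 (q1+2*q2)); [destruct (Rle_or_lt 0 (q1-2*q2))|].
    + eexists; split; [apply solA; lra| absG].
    + destruct (Rle_or_lt p1 0) as [Hp|Hp].
      * finjump (3*(N*W)) (4*(N*W)).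
      * destruct (HS Hp) as [_ S1].
        assert (p1 <= N*(3*W)) by (eapply Sstep; [lra|eauto|apply Rabs_le; split; lra]).
        finjump (3*(N*W)) (4*(N*W)).
    + destruct (Rle_or_lt p1 0) as [Hp|Hp].
      * finjump (3*(N*W)) (4*(N*W)).
      * destruct (HS Hp) as [S1 _].
        assert (p1 <= N*(3*W)) by (eapply Sstep; [lra|eauto|apply Rabs_le; split; lra]).
        finjump (3*(N*W)) (4*(N*W)).
Qed.

Ltac rjump J :=
  match goal with |- exists z, Gamma (?p1,?p2) z /\ box _ z _ =>
    let z := fresh "z" in let Hz := fresh in let Bz := fresh in
    destruct (exists_sol p1 p2 J) as [z [Hz Bz]];
    [apply Rabs_le; split; lra | apply Rabs_le; split; lra |];
    exists z; split; [exact Hz|];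
    destruct z as [[? ?][? ?]]; simpl in Bz; absG
  end.

Lemma rob_core N d p1 p2 x1 x2 y1 y2 a1 a2 b1 b2 :
  1 <= N ->
  (0 < p1 -> p1 <= N * Rabs (p1 + 2*p2) /\ p1 <= N * Rabs (p1 - 2*p2)) ->
  Rabs (x1 - p1 - /2*y1 - /2*y2) <= d -> Rabs (- x2 - p2 + y1 - y2) <= d ->
  Rabs ((- /2*x1 + x2) - a1) <= d -> Rabs ((- /2*x1 - x2) - a2) <= d ->
  Rabs (y1 - b1) <= d -> Rabs (y2 - b2) <= d ->
  a1 <= 0 -> a2 <= 0 -> 0 <= b1 -> 0 <= b2 -> a1 * b1 = 0 -> a2 * b2 = 0 ->
  exists z, Gamma (p1,p2) z /\ box ((x1,x2),(y1,y2)) z (100*(N*d)).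
Proof.
  intros HN HS R1 R2 R3 R4 R5 R6 A1 A2 B1 B2 C1 C2.
  assert (0 <= d) by (pose proof (Rabs_pos (y1-b1)); lra).
  assert (d <= N*d) by nra.
  absH.
  apply Rmult_integral in C1; apply Rmult_integral in C2.
  destruct C1 as [C1|C1]; destruct C2 as [C2|C2].
  -
    destruct (Rle_or_lt (2*p1+p2) 0); destruct (Rle_or_lt (2*p1-p2) 0).
    + eexists; split; [apply solD; lra| absG].
    + destruct (Rle_or_lt 0 (p1-2*p2)).
      * eexists; split; [apply solC; lra| absG].
      * rjump (20*(N*d)).
    + destruct (Rle_or_lt 0 (p1+2*p2)).
      * eexists; split; [apply solB; lra| absG].
      * rjump (20*(N*d)).
    + destruct (Rle_or_lt 0 (p1+2*p2)).
      * eexists; split; [apply solB; lra| absG].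
      * rjump (20*(N*d)).
  -
    destruct (Rle_or_lt 0 (p1+2*p2)); [destruct (Rle_or_lt 0 (2*p1+p2))|].
    + eexists; split; [apply solB; lra| absG].
    + eexists; split; [apply solD; lra| absG].
    + destruct (Rle_or_lt p1 0) as [Hp|Hp].
      * rjump (20*(N*d)).
      * destruct (HS Hp) as [S1 _].
        assert (p1 <= N*(20*d)) by (eapply Sstep; [lra|eauto|apply Rabs_le; split; lra]).
        rjump (20*(N*d)).
  -
    destruct (Rle_or_lt 0 (p1-2*p2)); [destruct (Rle_or_lt 0 (2*p1-p2))|].
    + eexists; split; [apply solC; lra| absG].
    + eexists; split; [apply solD; lra| absG].
    + destruct (Rle_or_lt p1 0) as [Hp|Hp].
      * rjump (20*(N*d)).
      * destruct (HS Hp) as [_ S1].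
        assert (p1 <= N*(20*d)) by (eapply Sstep; [lra|eauto|apply Rabs_le; split; lra]).
        rjump (20*(N*d)).
  -
    destruct (Rle_or_lt 0 (p1+2*p2)); [destruct (Rle_or_lt 0 (p1-2*p2))|].
    + eexists; split; [apply solA; lra| absG].
    + destruct (Rle_or_lt p1 0) as [Hp|Hp].
      * rjump (20*(N*d)).
      * destruct (HS Hp) as [_ S1].
        assert (p1 <= N*(20*d)) by (eapply Sstep; [lra|eauto|apply Rabs_le; split; lra]).
        rjump (20*(N*d)).
    + destruct (Rle_or_lt p1 0) as [Hp|Hp].
      * rjump (20*(N*d)).
      * destruct (HS Hp) as [S1 _].
        assert (p1 <= N*(20*d)) by (eapply Sstep; [lra|eauto|apply Rabs_le; split; lra]).
        rjump (20*(N*d)).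
Qed.

Lemma inv_small eps : eps > 0 -> exists n0 : nat, forall n, (n >= n0)%nat -> / (INR n + 1) < eps.
Proof.
  intros He. destruct (INR_unbounded (/eps)) as [n0 Hn0]. exists n0. intros n Hn.
  apply le_INR in Hn. rewrite <- (Rinv_inv eps).
  apply Rinv_lt_contravar.
  - apply Rmult_lt_0_compat; [apply Rinv_0_lt_compat; lra| pose proof (pos_INR n); lra].
  - lra.
Qed.

Lemma cone c P : ~ contingent_cone0 P (1, c) ->
  exists N, 1 <= N /\ forall q, P q -> norm2 q < / N -> 0 < fst q ->
    fst q <= N * Rabs (c * fst q - snd q).
Proof.
  intros Hc. apply NNPP; intros Hn.
  assert (Hex : forall n : nat, exists q, P q /\ norm2 q < / (INR n + 1) /\ 0 < fst q /\
             (INR n + 1) * Rabs (c * fst q - snd q) < fst q).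
  { intros n. apply NNPP; intros Hq. apply Hn. exists (INR n + 1). split.
    { pose proof (pos_INR n); lra. }
    intros q H1 H2 H3. apply Rnot_lt_le. intros H4. apply Hq. exists q. tauto. }
  set (f := fun n => proj1_sig (constructive_indefinite_description _ (Hex n))).
  assert (Hf : forall n, P (f n) /\ norm2 (f n) < / (INR n + 1) /\ 0 < fst (f n) /\
             (INR n + 1) * Rabs (c * fst (f n) - snd (f n)) < fst (f n)).
  { intros n. unfold f. destruct (constructive_indefinite_description _ (Hex n)); simpl; auto. }
  apply Hc. exists (fun k => fst (f k)), (fun k => (1, snd (f k) / fst (f k))).
  split; [|split; [|split; [|split]]].
  - intros k; apply Hf.
  - intros eps He. destruct (inv_small eps He) as [n0 Hn0]. exists n0. intros n Hn1.
    unfold Rdist. destruct (Hf n) as (_&H2&H3&_). pose proof (norm2_ge1 (f n)).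
    specialize (Hn0 n Hn1). rewrite Rminus_0_r. apply Rle_lt_trans with (norm2 (f n)); [auto|lra].
  - intros eps He. exists 0%nat. intros n _. unfold Rdist; simpl.
    rewrite Rminus_diag, Rabs_R0; lra.
  - intros eps He. destruct (inv_small eps He) as [n0 Hn0]. exists n0. intros n Hn1.
    unfold Rdist; simpl. specialize (Hn0 n Hn1).
    destruct (Hf n) as (_&_&H3&H4).
    destruct (f n) as [q1 q2]; simpl in *.
    set (m := INR n + 1) in *. assert (Hm : 0 < m) by (unfold m; pose proof (pos_INR n); lra).
    set (u := q2 / q1). assert (Hq2 : q2 = u * q1) by (unfold u; field; lra).
    rewrite Hq2 in H4. replace (c*q1 - u*q1) with ((c - u) * q1) in H4 by ring.
    rewrite Rabs_mult, (Rabs_pos_eq q1) in H4 by lra.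
    assert (HA : m * Rabs (c - u) < 1).
    { apply Rmult_lt_reg_r with q1; lra. }
    assert (Rabs (c-u) < / m).
    { apply Rmult_lt_reg_l with m; auto. rewrite Rinv_r by lra. lra. }
    rewrite <- Rabs_Ropp. replace (- (u - c)) with (c - u) by ring. lra.
  - intros k. destruct (Hf k) as (H1&_&H3&_). unfold scal2; simpl.
    destruct (f k) as [q1 q2]; simpl in *.
    replace (q1 * 1) with q1 by ring. replace (q1 * (q2/q1)) with q2 by (field; lra). auto.
Qed.

Lemma Sprop P : ~ contingent_cone0 P (1, /2) -> ~ contingent_cone0 P (1, - /2) ->
  exists N dV, 1 <= N /\ 0 < dV /\ forall q1 q2, P (q1,q2) -> norm2 (q1,q2) < dV ->
   (0 < q1 -> q1 <= N * Rabs (q1 + 2*q2) /\ q1 <= N * Rabs (q1 - 2*q2)).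
Proof.
  intros H1 H2. destruct (cone _ _ H1) as [N1 [HN1 S1]]. destruct (cone _ _ H2) as [N2 [HN2 S2]].
  exists (N1+N2), (Rmin (/N1) (/N2)). split; [lra|split].
  { apply Rmin_pos; apply Rinv_0_lt_compat; lra. }
  intros q1 q2 HP Hn Hq. pose proof (Rmin_l (/N1) (/N2)); pose proof (Rmin_r (/N1) (/N2)).
  specialize (S1 (q1,q2) HP ltac:(lra) Hq). specialize (S2 (q1,q2) HP ltac:(lra) Hq).
  simpl in *.
  assert (Rabs (-/2*q1 - q2) <= Rabs (q1 + 2*q2)) by (unfold Rabs; repeat destruct Rcase_abs; lra).
  assert (Rabs (/2*q1 - q2) <= Rabs (q1 - 2*q2)) by (unfold Rabs; repeat destruct Rcase_abs; lra).
  pose proof (Rabs_pos (q1+2*q2)); pose proof (Rabs_pos (q1-2*q2)).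
  pose proof (Rabs_pos (-/2*q1 - q2)); pose proof (Rabs_pos (/2*q1 - q2)).
  split; nra.
Qed.

Theorem mainTheorem16 (P : R2 -> Prop) :
  P (0, 0) ->
  ~ contingent_cone0 P (1, /2) ->
  ~ contingent_cone0 P (1, - /2) ->
  robinson_stable P ((0, 0), (0, 0)) /\ lipschitz_like P ((0, 0), (0, 0)).
Proof.
  intros _ H1 H2. destruct (Sprop P H1 H2) as (N & dV & HN & HdV & HS).
  split.
  - exists (400*N), dV, 1. split; [lra|split; [lra|split; [lra|]]].
    intros [p1 p2] [[x1 x2] [y1 y2]] HP Hn _ u [a1 a2] [b1 b2] [Hu Hg] eps Heps.
    subst u. destruct Hg as (A1&A2&B1&B2&C1&C2); simpl in *.
    set (d := dist_g (p1,p2) ((x1,x2),(y1,y2)) (0,0) (a1,a2) (b1,b2)).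
    assert (Hd : d = sqrt ((x1 - p1 - /2*y1 - /2*y2 - 0)^2 + (- x2 - p2 + y1 - y2 - 0)^2
       + ((- /2*x1 + x2 - a1)^2 + (- /2*x1 - x2 - a2)^2) + ((y1 - b1)^2 + (y2-b2)^2))).
    { unfold d, dist_g. rewrite !norm2_sq. unfold sub2, G, phi. simpl. reflexivity. }
    pose proof (pow2_ge_0 (x1 - p1 - /2*y1 - /2*y2 - 0)).
    pose proof (pow2_ge_0 (- x2 - p2 + y1 - y2 - 0)).
    pose proof (pow2_ge_0 (- /2*x1 + x2 - a1)).
    pose proof (pow2_ge_0 (- /2*x1 - x2 - a2)).
    pose proof (pow2_ge_0 (y1 - b1)). pose proof (pow2_ge_0 (y2 - b2)).
    destruct (rob_core N d p1 p2 x1 x2 y1 y2 a1 a2 b1 b2) as [z [Hz Bz]]; auto;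
      try (rewrite Hd; apply abs_le_sqrt; lra).
    exists z; split; auto. apply box_dist4 in Bz. unfold d in Bz. eapply Rle_trans; [exact Bz|]. unfold R2 in *. lra.
  - exists (80*N), dV, 1. split; [lra|split; [lra|split; [lra|]]].
    intros [p1 p2] [q1 q2] [[x1 x2] [y1 y2]] HP Hn HP' Hn' Hz _.
    destruct (lip_core N (norm2 (sub2 (p1,p2) (q1,q2))) p1 p2 q1 q2 x1 x2 y1 y2) as [z' [Hz' Bz]]; auto.
    + exact (norm2_ge1 (sub2 (p1,p2) (q1,q2))).
    + exact (norm2_ge2 (sub2 (p1,p2) (q1,q2))).
    + exists z'; split; auto. apply box_dist4 in Bz. unfold R2 in *. lra.
Qed.
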